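(* Let $\Gamma=(\mathcal{G},\mathcal{I},\boldsymbol{c})$ be a nonatomic routing game with BPR-type cost functions, i.e., there is $\beta\in\mathbb{R}_+$ such that $c_e(x)=t_e+a_ex^{\beta}$ with $t_e,a_e\in\mathbb{R}_+$ for every edge $e$, and suppose $\mathcal{G}$ is a directed acyclic multigraph. Then there exists a non-negative demand-independent optimal toll (DIOT) $\boldsymbol{\tau}\in\mathbb{R}_+^{\mathcal{E}}$ for $\Gamma$.
   Context: A nonatomic routing game $\Gamma=(\mathcal{G},\mathcal{I},\boldsymbol{c})$ consists of a finite directed multigraph $\mathcal{G}=(\mathcal{V},\mathcal{E})$, a finite set $\mathcal{I}$ of origin-destination pairs $i$ with origin $o^i$ and destination $d^i$, and nondecreasing continuous cost functions $c_e:\mathbb{R}_+\to\mathbb{R}_+$. $\mathcal{P}^i$ is the set of simple $o^i$–$d^i$ paths. For a demand vector $\boldsymbol{\mu}\in\mathbb{R}_+^{\mathcal{I}}$, feasible flows are $\boldsymbol{f}\in\mathbb{R}_+^{\mathcal{P}}$ with $\sum_{p\in\mathcal{P}^i}f_p=\mu^i$; loads $x_e=\sum_{p\ni e}f_p$; path costs $c_p=\sum_{e\in p}c_e(x_e)$. A Wardrop equilibrium is a feasible flow where every used path of each pair $i$ has cost at most that of any other path in $\mathcal{P}^i$. The total cost is $L(\boldsymbol{f})=\sum_p f_pc_p(\boldsymbol{f})$; a system optimum minimizes $L$ over feasible flows. For a toll vector $\boldsymbol{\tau}\in\mathbb{R}^{\mathcal{E}}$, $\Gamma^{\boldsymbol{\tau}}$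 has edge costs $c_e(x)+\tau_e$. $\boldsymbol{\tau}$ is a DIOT for $\Gamma$ if for every demand vector $\boldsymbol{\mu}\in\mathbb{R}_+^{\mathcal{I}}$ every Wardrop equilibrium of $\Gamma^{\boldsymbol{\tau}}$ with demand $\boldsymbol{\mu}$ is a system optimum of $\Gamma$ for demand $\boldsymbol{\mu}$. *)

(* Defs.v *)
From HB Require Import structures.
From mathcomp Require Import all_boot all_order all_algebra.
From mathcomp Require Import reals exp.
Set Implicit Arguments. Unset Strict Implicit. Unset Printing Implicit Defensive.
Import Order.TTheory GRing.Theory Num.Theory.
Local Open Scope ring_scope.

Section Routing.
Variables (R : realType) (V E I : finType).
Variables (src tgt : E -> V) (orig dest : I -> V).

Fixpoint is_walk (o : V) (p : seq E) (d : V) : bool :=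
  match p with
  | [::] => o == d
  | e :: p' => (src e == o) && is_walk (tgt e) p' d
  end.

Definition is_simple_path (o : V) (p : seq E) (d : V) : bool :=
  is_walk o p d && uniq (o :: map tgt p).

Definition acyclic : Prop := forall (v : V) (p : seq E), is_walk v p v -> p = [::].

Fixpoint allseqs (n : nat) : seq (seq E) :=
  match n with
  | 0 => [:: [::]]
  | n'.+1 => [::] :: [seq e :: s | e <- enum E, s <- allseqs n']
  end.

(* P^i : duplicate-free enumeration of the simple orig i - dest i paths
   (a simple path has pairwise distinct edges, hence length <= #|E|) *)
Definition paths (i : I) : seq (seq E) :=
  undup [seq p <- allseqs #|E| | is_simple_path (orig i) p (dest i)].

Definition flow := I -> seq E -> R.

Definition load (f : flow) (e : E) : R :=
  \sum_(i : I) \sum_(p <- paths i) f i p * (e \in p)%:R.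

Definition path_cost (c : E -> R -> R) (f : flow) (p : seq E) : R :=
  \sum_(e <- p) c e (load f e).

Definition feasible (mu : I -> R) (f : flow) : Prop :=
  (forall i p, p \in paths i -> 0 <= f i p) /\
  (forall i, \sum_(p <- paths i) f i p = mu i).

Definition wardrop (c : E -> R -> R) (mu : I -> R) (f : flow) : Prop :=
  feasible mu f /\
  forall i p q, p \in paths i -> q \in paths i -> 0 < f i p ->
    path_cost c f p <= path_cost c f q.

Definition total_cost (c : E -> R -> R) (f : flow) : R :=
  \sum_(i : I) \sum_(p <- paths i) f i p * path_cost c f p.

Definition system_optimum (c : E -> R -> R) (mu : I -> R) (f : flow) : Prop :=
  feasible mu f /\ forall g, feasible mu g -> total_cost c f <= total_cost c g.

Definition tolled (c : E -> R -> R) (tau : E -> R) : E -> R -> R :=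
  fun e x => c e x + tau e.

Definition is_DIOT (c : E -> R -> R) (tau : E -> R) : Prop :=
  forall mu : I -> R, (forall i, 0 <= mu i) ->
  forall f : flow, wardrop (tolled c tau) mu f -> system_optimum c mu f.

End Routing.

(* BPR-type cost c_e(x) = t_e + a_e x^beta  (powR 0 0 = 1) *)
Definition bpr {R : realType} {E : Type} (t a : E -> R) (beta : R) : E -> R -> R :=
  fun e x => t e + a e * powR x beta.

(* Main.v *)
Require Import Defs.
From HB Require Import structures.
From mathcomp Require Import all_boot all_order all_algebra.
From mathcomp Require Import reals exp.
From mathcomp Require Import boolp ring lra.
Import Order.TTheory GRing.Theory Num.Theory.
Local Open Scope ring_scope.

Lemma convex_ineq (R : realType) (beta x y : R) : 0 <= beta -> 0 <= x -> 0 <= y ->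
  (1 + beta) * x `^ beta * (y - x) <= y * y `^ beta - x * x `^ beta.
Proof.
move=> hb hx hy.
have [->|bpos] := eqVneq beta 0.
  by rewrite !powRr0 addr0 !mulr1 mul1r.
have b0 : 0 < beta by rewrite lt_def bpos hb.
have K0 : 0 < 1 + beta by lra.
have e1 : 1 + beta - 1 = beta by ring.
have ey : y * y `^ beta = y `^ (1 + beta).
  by rewrite -(mulr_powRB1 hy K0) e1.
have ex : x * x `^ beta = x `^ (1 + beta).
  by rewrite -(mulr_powRB1 hx K0) e1.
have q0 : 0 < (1 + beta) / beta by apply: divr_gt0.
have pq : (1 + beta)^-1 + ((1 + beta) / beta)^-1 = 1.
  by rewrite invf_div; field; rewrite gt_eqF.
have := conjugate_powR hy (powR_ge0 x beta) K0 q0 pq.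
rewrite -powRrM.
have -> : beta * ((1 + beta) / beta) = 1 + beta by field.
rewrite -ey -ex => H.
have H2 : (1 + beta) * (y * x `^ beta) <= y * y `^ beta + beta * (x * x `^ beta).
  rewrite -(ler_pM2l K0) in H.
  apply: (le_trans H).
  rewrite le_eqVlt; apply/orP; left; apply/eqP.
  rewrite invf_div; field; rewrite gt_eqF //.
nra.
Qed.
Section G.
Variables (R : realType) (V E I : finType).
Variables (src tgt : E -> V) (orig dest : I -> V).

Lemma walk_cat u p v q w : is_walk src tgt u p v -> is_walk src tgt v q w ->
  is_walk src tgt u (p ++ q) w.
Proof.
elim: p u => [|e p IH] u /=; first by move/eqP->.
by case/andP=> -> /IH H /H ->.
Qed.

Lemma walk_tele (phi : V -> R) o p d : is_walk src tgt o p d ->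
  \sum_(e <- p) (phi (tgt e) - phi (src e)) = phi d - phi o.
Proof.
elim: p o => [|e p IH] o /=; first by move/eqP->; rewrite big_nil subrr.
case/andP=> /eqP <- /IH H; rewrite big_cons H; ring.
Qed.

Definition predv (v : V) : {set V} :=
  [set u | `[< exists p, p != [::] /\ is_walk src tgt u p v >]].

Lemma pred_card e : acyclic src tgt ->
  (#|predv (src e)|.+1 <= #|predv (tgt e)|)%N.
Proof.
move=> ac.
have nin : src e \notin predv (src e).
  rewrite inE; apply/asboolP => -[p [/eqP pn /ac]] //.
have sub : src e |: predv (src e) \subset predv (tgt e).
  apply/subsetP => u; rewrite !inE => /orP[/eqP->|].
    apply/asboolP; exists [:: e]; split => //=; by rewrite !eqxx.
  move/asboolP => [p [pn wp]]; apply/asboolP; exists (p ++ [:: e]); split.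
    by case: p pn {wp}.
  apply: walk_cat wp _ => /=; by rewrite !eqxx.
by have := subset_leq_card sub; rewrite cardsU1 nin.
Qed.

Local Notation paths := (paths src tgt orig dest).
Local Notation load := (load src tgt orig dest).

Lemma paths_prop i p : p \in paths i -> uniq p /\ is_walk src tgt (orig i) p (dest i).
Proof.
rewrite mem_undup mem_filter => /andP[/andP[hw hu] _]; split => //.
by move: hu => /= /andP[_ /map_uniq].
Qed.

Lemma exch (h : I -> seq E -> R) (F : E -> R) :
  \sum_(i : I) \sum_(p <- paths i) h i p * \sum_(e <- p) F e =
  \sum_(e : E) load h e * F e.
Proof.
rewrite /Defs.load.
under [RHS]eq_bigr => e _ do rewrite mulr_suml.
rewrite [RHS]exchange_big; apply: eq_bigr => i _.
under [RHS]eq_bigr => e _ do rewrite mulr_suml.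
rewrite [RHS]exchange_big /=; apply: eq_big_seq => p /paths_prop [up _].
under [RHS]eq_bigr => e _ do rewrite -mulrA.
rewrite -mulr_sumr; congr (_ * _).
rewrite big_uniq // big_mkcond; apply: eq_bigr => e _.
by case: (e \in p); rewrite ?mul1r ?mul0r.
Qed.

Lemma sum0_ge0 (T : eqType) (r : seq T) (F : T -> R) :
  (forall x, x \in r -> 0 <= F x) -> \sum_(x <- r) F x = 0 ->
  forall x, x \in r -> F x = 0.
Proof.
elim: r => [|a r IH] //= H; rewrite big_cons => hs x.
have ha : 0 <= F a by apply: H; rewrite inE eqxx.
have hr : 0 <= \sum_(y <- r) F y.
  by rewrite big_seq; apply: sumr_ge0 => y hy; apply: H; rewrite inE hy orbT.
have fa : F a = 0 by lra.
rewrite inE => /orP[/eqP->//|]; apply: IH.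
  by move=> y hy; apply: H; rewrite inE hy orbT.
lra.
Qed.

Lemma load_ge0 (mu : I -> R) h e : feasible src tgt orig dest mu h -> 0 <= load h e.
Proof.
move=> [hp _]; apply: sumr_ge0 => i _; rewrite big_seq; apply: sumr_ge0 => p hpi.
by apply: mulr_ge0; [apply: hp | apply: ler0n].
Qed.

End G.
Lemma pair_ineq (R : realType) (T : eqType) (r : seq T) (fp gp MC : T -> R) (mu : R) :
  0 <= mu -> (forall p, p \in r -> 0 <= fp p) -> (forall p, p \in r -> 0 <= gp p) ->
  \sum_(p <- r) fp p = mu -> \sum_(p <- r) gp p = mu ->
  (forall p q, p \in r -> q \in r -> 0 < fp p -> MC p <= MC q) ->
  \sum_(p <- r) fp p * MC p <= \sum_(p <- r) gp p * MC p.
Proof.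
move=> hmu hf hg Hf Hg W.
have [mu0|mupos] := eqVneq mu 0.
  rewrite mu0 in Hf Hg.
  have f0 := sum0_ge0 _ _ _ _ hf Hf; have g0 := sum0_ge0 _ _ _ _ hg Hg.
  rewrite big_seq [X in _ <= X]big_seq !big1 // => p hp.
    by rewrite g0 // mul0r.
  by rewrite f0 // mul0r.
have mu_gt0 : 0 < mu by rewrite lt_def mupos hmu.
rewrite -(ler_pM2l mu_gt0).
have L : mu * \sum_(p <- r) fp p * MC p = \sum_(p <- r) \sum_(q <- r) fp p * gp q * MC p.
  rewrite -{1}Hg mulr_suml.
  under eq_bigr => q _ do rewrite mulr_sumr.
  rewrite exchange_big; apply: eq_bigr => p _; apply: eq_bigr => q _; ring.
have L2 : mu * \sum_(p <- r) gp p * MC p = \sum_(p <- r) \sum_(q <- r) fp p * gp q * MC q.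
  rewrite -{1}Hf mulr_suml; apply: eq_bigr => p _; rewrite mulr_sumr.
  apply: eq_bigr => q _; ring.
rewrite L L2 big_seq [X in _ <= X]big_seq; apply: ler_sum => p hp.
rewrite big_seq [X in _ <= X]big_seq; apply: ler_sum => q hq.
have [fp0|fpn] := eqVneq (fp p) 0; first by rewrite fp0 !mul0r.
have fpp : 0 < fp p by rewrite lt_def fpn hf.
apply: ler_wpM2l; first by apply: mulr_ge0; [apply: ltW | apply: hg].
exact: W.
Qed.

Theorem theorem6 (R : realType) (V E I : finType)
  (src tgt : E -> V) (orig dest : I -> V)
  (t a : E -> R) (beta : R) :
  0 <= beta -> (forall e, 0 <= t e) -> (forall e, 0 <= a e) ->
  acyclic src tgt ->
  exists tau : E -> R, (forall e, 0 <= tau e) /\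
    is_DIOT src tgt orig dest (bpr t a beta) tau.
Proof.
move=> hb ht ha ac.
set K := 1 + beta.
have K0 : 0 < K by rewrite /K; lra.
pose w e := t e - t e / K.
have w0 : forall e, 0 <= w e.
  move=> e; rewrite /w subr_ge0 ler_pdivrMr //; have := ht e; rewrite /K; nra.
pose M := \sum_(e : E) w e.
have wM : forall e, w e <= M.
  move=> e; rewrite /M (bigD1 e) //= lerDl; exact: sumr_ge0.
pose pi v := M * (#|predv _ _ src tgt v|)%:R.
exists (fun e => pi (tgt e) - pi (src e) - w e); split.
  move=> e; have := pred_card _ _ src tgt e ac; rewrite -(ler_nat R) -addn1 natrD => hc.
  have := wM e; have := w0 e; rewrite /pi; nra.
move=> mu hmu f [[hfp hfs] W]; split; first by [].
move=> g [hgp hgs].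
set x := load src tgt orig dest f.
pose MC e := t e + K * a e * x e `^ beta.
have TC : forall h, total_cost src tgt orig dest (bpr t a beta) h =
   \sum_(e : E) load src tgt orig dest h e * bpr t a beta e (load src tgt orig dest h e).
  move=> h; exact: exch.
have S1 : \sum_(e : E) (load src tgt orig dest g e - x e) * MC e <=
    \sum_(e : E) (load src tgt orig dest g e * bpr t a beta e (load src tgt orig dest g e) -
     load src tgt orig dest f e * bpr t a beta e (load src tgt orig dest f e)).
  apply: ler_sum => e _.
  have hx : 0 <= x e by apply: (load_ge0 _ _ _ _ _ _ _ _ mu); split.
  have hy : 0 <= load src tgt orig dest g e by apply: (load_ge0 _ _ _ _ _ _ _ _ mu); split.
  have := convex_ineq _ _ _ _ hb hx hy; have := ha e.
  rewrite /MC /bpr /K -/x; nra.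
rewrite sumrB -!TC in S1.
have S2 : 0 <= \sum_(e : E) (load src tgt orig dest g e - x e) * MC e.
  under eq_bigr => e _ do rewrite mulrBl.
  rewrite sumrB /x -!exch subr_ge0; apply: ler_sum => i _.
  apply: (pair_ineq R _ _ (f i) (g i) (fun p => \sum_(e <- p) MC e) (mu i)) => //.
  - by move=> p; apply: hfp.
  - by move=> p; apply: hgp.
  move=> p q hp hq fpos.
  have PC : forall p, p \in paths src tgt orig dest i ->
      path_cost src tgt orig dest (tolled (bpr t a beta) (fun e => pi (tgt e) - pi (src e) - w e)) f p
      = K^-1 * \sum_(e <- p) MC e + (pi (dest i) - pi (orig i)).
    move=> p' /paths_prop [_ hw].
    rewrite /path_cost -(walk_tele _ _ _ _ _ pi _ _ _ hw) mulr_sumr -big_split /=.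
    apply: eq_bigr => e _; rewrite /tolled /bpr /MC /w -/x; field.
    by rewrite gt_eqF.
  have := W i p q hp hq fpos; rewrite !PC // lerD2r ler_pM2l //.
  by rewrite invr_gt0.
lra.
Qed.
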